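(* Let $N \ge 1$ and let $f_N(t) = \sum_{n=1}^N c_n e^{\alpha_n t}$ with real coefficients $c_n$ and pairwise distinct nonzero real rate constants $\alpha_n$ (no sign condition on $f_N$ is assumed). For $k \ge 0$ let $$I_{(k)}(t) := \int_0^{t}\int_0^{t^{(1)}}\cdots\int_0^{t^{(k)}} f_N(t^{(k+1)})\, dt^{(k+1)} \cdots dt^{(1)}$$ denote the $(k+1)$-fold iterated integral of $f_N$ from $0$. Let $t_1,\dots,t_{2N+1}$ be distinct nonnegative reals. Given $\{f_N(t_i) : i = 1,\dots,2N\}$ and $\{I_{(k)}(t_i) : k = 1,2,\dots,N,\ i = 1,\dots,2N+1\}$, the coefficients $c_n$ and rate constants $\alpha_n$, $n = 1,\dots,N$, are uniquely determined. *)

(* Defs.v *)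
From Stdlib Require Import Reals.
From Coquelicot Require Import Coquelicot.
Open Scope R_scope.

(* f_N(t) = sum_{n=0}^{N-1} c n * exp (a n * t)   (indices shifted to 0..N-1) *)
Fixpoint expsum (N : nat) (c a : nat -> R) (t : R) : R :=
  match N with
  | O => 0
  | S m => expsum m c a t + c m * exp (a m * t)
  end.

(* iint f k t = I_(k)(t): the (k+1)-fold iterated integral of f from 0. *)
Fixpoint iint (f : R -> R) (k : nat) (t : R) : R :=
  match k with
  | O => RInt f 0 t
  | S k' => RInt (iint f k') 0 t
  end.

(* Main.v *)
Require Import Defs.
From Stdlib Require Import Reals Lra Lia Classical.
From Coquelicot Require Import Coquelicot.
Open Scope R_scope.
Open Scope R_scope.

Fixpoint ssum (M : nat) (F : nat -> R) : R :=
  match M with O => 0 | S m => ssum m F + F m end.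

Lemma expsum_ssum M d b t : expsum M d b t = ssum M (fun j => d j * exp (b j * t)).
Proof. induction M; simpl; auto. rewrite IHM; auto. Qed.

Lemma ssum_ext M F G : (forall j, (j < M)%nat -> F j = G j) -> ssum M F = ssum M G.
Proof. induction M; intros H; simpl; auto. rewrite IHM by (intros; apply H; lia). rewrite H by lia; auto. Qed.

Definition sk (k j : nat) : nat := if (j <? k)%nat then j else S j.

Lemma ssum_skip M F k : (k <= M)%nat ->
  ssum (S M) F = ssum M (fun j => F (sk k j)) + F k.
Proof.
  revert k; induction M; intros k Hk.
  - assert (k = 0%nat) by lia; subst; simpl; lra.
  - destruct (Nat.eq_dec k (S M)) as [->|Hne].
    + change (ssum (S (S M)) F) with (ssum (S M) F + F (S M)).
      f_equal. apply ssum_ext. intros j Hj. unfold sk.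
      destruct (Nat.ltb_spec j (S M)); auto; lia.
    + change (ssum (S (S M)) F) with (ssum (S M) F + F (S M)).
      rewrite (IHM k) by lia. simpl.
      replace (sk k M) with (S M) by (unfold sk; destruct (Nat.ltb_spec M k); lia). lra.
Qed.

Lemma ssum_split K M F : ssum (K + M) F = ssum K F + ssum M (fun j => F (K + j)%nat).
Proof. induction M; simpl. rewrite Nat.add_0_r; lra. rewrite Nat.add_succ_r; simpl. rewrite IHM; lra. Qed.

Lemma ssum_scal M F r : ssum M (fun j => r * F j) = r * ssum M F.
Proof. induction M; simpl. lra. rewrite IHM; lra. Qed.

Lemma expsum_shift M d b beta t :
  expsum M d (fun j => b j - beta) t = exp (- beta * t) * expsum M d b t.
Proof.
  rewrite !expsum_ssum, <- ssum_scal. apply ssum_ext; intros j _.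
  replace ((b j - beta) * t) with (b j * t + - beta * t) by ring.
  rewrite exp_plus; ring.
Qed.

Lemma expsum_derive M d b t :
  is_derive (expsum M d b) t (expsum M (fun j => d j * b j) b t).
Proof.
  induction M; simpl.
  - apply (is_derive_const 0).
  - apply (is_derive_plus (expsum M d b) (fun t => d M * exp (b M * t))); auto.
    auto_derive; auto. ring.
Qed.

Definition incr (s : nat -> R) (n : nat) := forall i, (S i < n)%nat -> s i < s (S i).

Lemma rolle_strict f df a b : (forall x, is_derive f x (df x)) -> a < b -> f a = f b ->
  exists c, a < c < b /\ df c = 0.
Proof.
  intros Hd Hab Hf.
  assert (pr : forall x, a < x < b -> derivable_pt f x).
  { intros x _. exists (df x). apply is_derive_Reals, Hd. }
  destruct (Rolle f a b pr) as [c [P Hc]]; auto.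
  - intros x _. apply derivable_continuous_pt. exists (df x). apply is_derive_Reals, Hd.
  - exists c; split; auto. rewrite <- Hc. unfold derive_pt.
    destruct (pr c P) as [l Hl]; simpl.
    apply (uniqueness_limite f c); [apply is_derive_Reals, Hd| exact Hl].
Qed.

Lemma fin_choice (n : nat) (P : nat -> R -> Prop) :
  (forall i, (i < n)%nat -> exists x, P i x) -> exists f : nat -> R, forall i, (i < n)%nat -> P i (f i).
Proof.
  induction n; intros H.
  - exists (fun _ => 0); intros; lia.
  - destruct IHn as [f Hf]. intros; apply H; lia.
    destruct (H n) as [x Hx]. lia.
    exists (fun i => if Nat.eqb i n then x else f i).
    intros i Hi. destruct (Nat.eqb_spec i n). subst; auto. apply Hf; lia.
Qed.

Lemma rolle_seq f df n s : (forall x, is_derive f x (df x)) -> incr s (S n) ->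
  (forall i, (i < S n)%nat -> f (s i) = 0) ->
  exists s', incr s' n /\ (forall i, (i < n)%nat -> s i < s' i < s (S i)) /\
    (forall i, (i < n)%nat -> df (s' i) = 0).
Proof.
  intros Hd Hs Hz.
  destruct (fin_choice n (fun i c => s i < c < s (S i) /\ df c = 0)) as [s' Hs'].
  { intros i Hi. apply rolle_strict with f; auto. apply Hs; lia.
    rewrite !Hz by lia; auto. }
  exists s'. repeat split; intros.
  - intros i Hi. pose proof (Hs' i ltac:(lia)). pose proof (Hs' (S i) Hi). lra.
  - apply Hs'; auto.
  - apply Hs'; auto.
  - apply Hs'; auto.
Qed.

Lemma zero_count M : forall d b s, incr s M -> (forall i, (i < M)%nat -> expsum M d b (s i) = 0) ->
  forall t, expsum M d b t = 0.
Proof.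
  induction M; intros d b s Hs Hz t.
  - reflexivity.
  - set (h := fun t => expsum M d (fun j => b j - b M) t + d M).
    assert (Hh : forall t, h t = exp (- b M * t) * expsum (S M) d b t).
    { intro u; unfold h; rewrite expsum_shift; simpl. 
      assert (E : exp (- b M * u) * exp (b M * u) = 1).
      { rewrite <- exp_plus. replace (- b M * u + b M * u) with 0 by ring. apply exp_0. }
      rewrite Rmult_plus_distr_l.
      replace (exp (- b M * u) * (d M * exp (b M * u))) with (d M * (exp (- b M * u) * exp (b M * u))) by ring.
      rewrite E; ring. }
    set (dh := expsum M (fun j => d j * (b j - b M)) (fun j => b j - b M)).
    assert (Hd : forall x, is_derive h x (dh x)).
    { intro x. unfold h, dh. replace (expsum M (fun j => d j * (b j - b M)) (fun j => b j - b M) x)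
       with (plus (expsum M (fun j => d j * (b j - b M)) (fun j => b j - b M) x) zero).
      apply (is_derive_plus _ (fun _ => d M)). apply expsum_derive. apply (@is_derive_const R_AbsRing R_NormedModule).
      rewrite plus_zero_r; auto. }
    destruct (rolle_seq h dh M s Hd Hs) as [s' [Hs' [_ Hz']]].
    { intros i Hi. rewrite Hh. rewrite Hz by lia. apply Rmult_0_r. }
    assert (H0 : forall x, dh x = 0) by (apply (IHM _ _ s'); auto).
    assert (Hc : h t = h (s 0%nat)).
    { destruct (MVT_gen h (s 0%nat) t dh) as [c [_ Hc]].
      - intros; apply Hd.
      - intros x _. apply derivable_continuous_pt. exists (dh x). apply is_derive_Reals, Hd.
      - rewrite H0 in Hc. lra. }
    rewrite Hh, Hh, Hz in Hc by lia.
    rewrite Rmult_0_r in Hc.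
    apply Rmult_integral in Hc. destruct Hc as [Hc|Hc]; auto.
    pose proof (exp_pos (- b M * t)); lra.
Qed.

Lemma fin_max n (z : nat -> R) : exists k, (k < S n)%nat /\ forall j, (j < S n)%nat -> z j <= z k.
Proof.
  induction n.
  - exists 0%nat; split; [lia|]. intros j Hj; assert (j = 0%nat) by lia; subst; lra.
  - destruct IHn as [k [Hk Hm]].
    destruct (Rle_dec (z k) (z (S n))).
    + exists (S n); split; [lia|]. intros j Hj.
      destruct (Nat.eq_dec j (S n)); [subst; lra|]. specialize (Hm j ltac:(lia)); lra.
    + exists k; split; [lia|]. intros j Hj.
      destruct (Nat.eq_dec j (S n)); [subst; lra|]. apply Hm; lia.
Qed.

Lemma sort_seq n : forall z : nat -> R,
  (forall i j, (i < n)%nat -> (j < n)%nat -> i <> j -> z i <> z j) ->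
  exists s, incr s n /\ forall i, (i < n)%nat -> exists j, (j < n)%nat /\ s i = z j.
Proof.
  induction n; intros z Hinj.
  - exists (fun _ => 0). split. intros i Hi; lia. intros; lia.
  - destruct (fin_max n z) as [m [Hm Hmax]].
    set (z' := fun i => if Nat.eqb i m then z n else z i).
    destruct (IHn z') as [s [Hs Hsz]].
    { intros i j Hi Hj Hij. unfold z'.
      destruct (Nat.eqb_spec i m); destruct (Nat.eqb_spec j m); subst; try lia;
      apply Hinj; lia. }
    exists (fun i => if Nat.eqb i n then z m else s i). split.
    + intros i Hi. destruct (Nat.eqb_spec i n); [lia|].
      destruct (Nat.eqb_spec (S i) n).
      * destruct (Hsz i ltac:(lia)) as [j [Hj Hij]]. rewrite Hij. unfold z'.
        destruct (Nat.eqb_spec j m).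
        -- assert (z n <= z m) by (apply Hmax; lia).
           assert (z n <> z m) by (apply Hinj; lia). lra.
        -- assert (z j <= z m) by (apply Hmax; lia).
           assert (z j <> z m) by (apply Hinj; lia). lra.
      * apply Hs; lia.
    + intros i Hi. destruct (Nat.eqb_spec i n).
      * exists m; split; auto.
      * destruct (Hsz i ltac:(lia)) as [j [Hj Hij]]. rewrite Hij. unfold z'.
        destruct (Nat.eqb_spec j m).
        -- exists n; split; auto.
        -- exists j; split; auto; lia.
Qed.

Definition sumclass M (d b : nat -> R) (beta : R) :=
  ssum M (fun j => if Req_EM_T (b j) beta then d j else 0).

Lemma sumclass_scale M d b g beta :
  sumclass M (fun j => d j * (b j - g)) (fun j => b j - g) (beta - g) = (beta - g) * sumclass M d b beta.
Proof.
  unfold sumclass. rewrite <- ssum_scal. apply ssum_ext; intros j _.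
  destruct (Req_EM_T (b j - g) (beta - g)); destruct (Req_EM_T (b j) beta); try lra.
  replace (b j) with beta by lra. ring.
Qed.

Lemma isolation M : forall d b, (forall t, expsum M d b t = 0) -> forall beta, sumclass M d b beta = 0.
Proof.
  induction M; intros d b Hg beta.
  - reflexivity.
  - destruct (classic (exists k, (k < S M)%nat /\ b k <> beta)) as [[k [Hk Hb]]|Hall].
    + set (d' := fun j => d (sk k j)). set (b' := fun j => b (sk k j)).
      assert (Hs : forall t, expsum M d' b' t + d k * exp (b k * t) = 0).
      { intro t. rewrite <- (Hg t), !expsum_ssum. rewrite (ssum_skip M _ k) by lia. reflexivity. }
      set (h := expsum M d' (fun j => b' j - b k)).
      assert (Hh : forall t, h t = - d k).
      { intro t. unfold h. rewrite expsum_shift.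
        replace (expsum M d' b' t) with (- (d k * exp (b k * t))) by (specialize (Hs t); lra).
        assert (E : exp (- b k * t) * exp (b k * t) = 1).
        { rewrite <- exp_plus. replace (- b k * t + b k * t) with 0 by ring. apply exp_0. }
        replace (exp (- b k * t) * - (d k * exp (b k * t))) with (- d k * (exp (- b k * t) * exp (b k * t))) by ring.
        rewrite E; ring. }
      assert (Hd : forall t, expsum M (fun j => d' j * (b' j - b k)) (fun j => b' j - b k) t = 0).
      { intro t. pose proof (expsum_derive M d' (fun j => b' j - b k) t) as D.
        fold h in D.
        apply is_derive_unique in D. rewrite <- D.
        rewrite (Derive_ext h (fun _ => - d k)) by apply Hh.
        apply Derive_const. }
      specialize (IHM _ _ Hd (beta - b k)).
      rewrite sumclass_scale in IHM.
      assert (Hc : sumclass M d' b' beta = 0).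
      { apply Rmult_integral in IHM. destruct IHM as [H|H]; auto. lra. }
      unfold sumclass in *. rewrite (ssum_skip M _ k) by lia.
      unfold d', b' in Hc. cbv beta. rewrite Hc. destruct (Req_EM_T (b k) beta); [lra|ring].
    + assert (Hb : forall j, (j < S M)%nat -> b j = beta).
      { intros j Hj. destruct (Req_EM_T (b j) beta); auto. exfalso; apply Hall; eauto. }
      rewrite <- (Hg 0). unfold sumclass. rewrite expsum_ssum. apply ssum_ext.
      intros j Hj. destruct (Req_EM_T (b j) beta). rewrite Rmult_0_r, exp_0; ring.
      exfalso; auto.
Qed.

Lemma iint_derive F (HF : forall x, continuous F x) : forall k t,
  is_derive (iint F k) t (match k with O => F t | S k' => iint F k' t end).
Proof.
  induction k; intro t.
  - simpl. apply (is_derive_RInt F (fun t => RInt F 0 t) 0 t); auto.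
    apply filter_forall. intro x. apply (@RInt_correct R_CompleteNormedModule), (@ex_RInt_continuous R_CompleteNormedModule). intros; apply HF.
  - assert (Hc : forall x, continuous (iint F k) x).
    { intro x. apply (@ex_derive_continuous R_AbsRing R_NormedModule). eexists. apply IHk. }
    change (iint F (S k)) with (fun t => RInt (iint F k) 0 t).
    apply (is_derive_RInt (iint F k) (fun t => RInt (iint F k) 0 t) 0 t); auto.
    apply filter_forall. intro x. apply (@RInt_correct R_CompleteNormedModule), (@ex_RInt_continuous R_CompleteNormedModule). intros; apply Hc.
Qed.

Lemma iint_0 F k : iint F k 0 = 0.
Proof. destruct k; simpl; apply (@RInt_point R_CompleteNormedModule). Qed.

Lemma expsum_cont M d b x : continuous (expsum M d b) x.
Proof. apply (@ex_derive_continuous R_AbsRing R_NormedModule). eexists. apply expsum_derive. Qed.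

Lemma ssum_zero M : ssum M (fun _ => 0) = 0.
Proof. induction M; simpl; auto. rewrite IHM; ring. Qed.

Lemma sumclass_none M d b beta : (forall j, (j < M)%nat -> b j <> beta) -> sumclass M d b beta = 0.
Proof.
  intro H. unfold sumclass. transitivity (ssum M (fun _ => 0)); [|apply ssum_zero]. apply ssum_ext.
  intros j Hj. destruct (Req_EM_T (b j) beta); [exfalso; exact (H j Hj e) | reflexivity].
Qed.

Lemma sumclass_inj M d b k :
  (forall n m, (n < M)%nat -> (m < M)%nat -> n <> m -> b n <> b m) -> (k < M)%nat ->
  sumclass M d b (b k) = d k.
Proof.
  intros Hinj Hk. destruct M as [|M]; [lia|]. unfold sumclass.
  rewrite (ssum_skip M _ k) by lia. cbv beta.
  rewrite (ssum_ext M _ (fun _ => 0)), ssum_zero.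
  destruct (Req_EM_T (b k) (b k)); [ring|congruence].
  intros j Hj. destruct (Req_EM_T (b (sk k j)) (b k)); auto.
  exfalso. revert e. apply Hinj; unfold sk; destruct (Nat.ltb_spec j k); lia.
Qed.

Theorem corollary4 (N : nat) (HN : (1 <= N)%nat)
  (c a c' a' : nat -> R) (t : nat -> R)
  (Ha_nz : forall n, (n < N)%nat -> a n <> 0)
  (Ha_inj : forall n m, (n < N)%nat -> (m < N)%nat -> n <> m -> a n <> a m)
  (Hc_nz : forall n, (n < N)%nat -> c n <> 0)
  (Ha'_nz : forall n, (n < N)%nat -> a' n <> 0)
  (Ha'_inj : forall n m, (n < N)%nat -> (m < N)%nat -> n <> m -> a' n <> a' m)
  (Hc'_nz : forall n, (n < N)%nat -> c' n <> 0)
  (Ht_nonneg : forall i, (i < 2 * N + 1)%nat -> 0 <= t i)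
  (Ht_inj : forall i j, (i < 2 * N + 1)%nat -> (j < 2 * N + 1)%nat ->
             i <> j -> t i <> t j)
  (Hf : forall i, (i < 2 * N)%nat ->
          expsum N c a (t i) = expsum N c' a' (t i))
  (HI : forall k i, (1 <= k <= N)%nat -> (i < 2 * N + 1)%nat ->
          iint (expsum N c a) k (t i) = iint (expsum N c' a') k (t i)) :
  (forall n, (n < N)%nat -> exists m, (m < N)%nat /\ c n = c' m /\ a n = a' m) /\
  (forall m, (m < N)%nat -> exists n, (n < N)%nat /\ c n = c' m /\ a n = a' m).
Proof.
  set (F := expsum N c a). set (F' := expsum N c' a').
  set (Dk := fun k x => iint F k x - iint F' k x).
  assert (HD : forall k x, is_derive (Dk (S k)) x (Dk k x)).
  { intros k x. unfold Dk.
    apply (is_derive_minus (iint F (S k)) (iint F' (S k)) x (iint F k x) (iint F' k x));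
    apply (iint_derive _ (expsum_cont _ _ _) (S k)). }
  assert (HD0 : forall x, is_derive (Dk 0%nat) x (F x - F' x)).
  { intros x. unfold Dk.
    apply (is_derive_minus (iint F 0) (iint F' 0) x (F x) (F' x));
    apply (iint_derive _ (expsum_cont _ _ _) 0). }
  assert (HDz : forall k, Dk k 0 = 0).
  { intro k; unfold Dk; rewrite !iint_0; ring. }
  set (P := fun k => exists s, incr s (S (2 * N)) /\ (forall i, (i < S (2 * N))%nat -> 0 <= s i)
     /\ (forall i, (i < S (2 * N))%nat -> Dk k (s i) = 0)).
  assert (PN : P N).
  { destruct (sort_seq (S (2 * N)) t) as [s [Hs Hst]].
    { intros i j Hi Hj Hij; apply Ht_inj; lia. }
    exists s; repeat split; auto.
    - intros i Hi. destruct (Hst i Hi) as [j [Hj ->]]. apply Ht_nonneg; lia.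
    - intros i Hi. destruct (Hst i Hi) as [j [Hj ->]]. unfold Dk.
      unfold F, F'. rewrite (HI N j) by lia. ring. }
  assert (Pstep : forall k, P (S k) -> P k).
  { intros k [s [Hs [Hn Hz]]].
    destruct (rolle_seq (Dk (S k)) (Dk k) (2 * N) s (HD k) Hs Hz) as [s' [Hs' [Hb Hz']]].
    exists (fun i => match i with O => 0 | S i => s' i end). repeat split.
    - intros i Hi. destruct i.
      + pose proof (Hn 0%nat ltac:(lia)). pose proof (Hb 0%nat ltac:(lia)). lra.
      + apply Hs'; lia.
    - intros i Hi. destruct i. lra. pose proof (Hn i ltac:(lia)). pose proof (Hb i ltac:(lia)). lra.
    - intros i Hi. destruct i. apply HDz. apply Hz'; lia. }
  assert (Pall : forall j, (j <= N)%nat -> P (N - j)%nat).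
  { induction j; intro Hj. rewrite Nat.sub_0_r; auto.
    apply Pstep. replace (S (N - S j)) with (N - j)%nat by lia. apply IHj; lia. }
  destruct (Pall N ltac:(lia)) as [s [Hs [_ Hz]]]. rewrite Nat.sub_diag in Hz.
  destruct (rolle_seq (Dk 0%nat) (fun x => F x - F' x) (2 * N) s HD0 Hs Hz) as [s' [Hs' [_ Hz']]].
  set (d := fun j => if (j <? N)%nat then c j else - c' (j - N)%nat).
  set (b := fun j => if (j <? N)%nat then a j else a' (j - N)%nat).
  assert (Hdb : forall x, expsum (N + N) d b x = F x - F' x).
  { intro x. unfold F, F'. rewrite !expsum_ssum, ssum_split.
    rewrite (ssum_ext N (fun j => d j * exp (b j * x)) (fun j => c j * exp (a j * x))).
    rewrite (ssum_ext N (fun j => d (N + j)%nat * exp (b (N + j)%nat * x)) (fun j => -1 * (c' j * exp (a' j * x)))).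
    rewrite ssum_scal; ring.
    - intros j Hj. unfold d, b. destruct (Nat.ltb_spec (N + j) N); [lia|].
      replace (N + j - N)%nat with j by lia. ring.
    - intros j Hj. unfold d, b. destruct (Nat.ltb_spec j N); [auto|lia]. }
  assert (Hzero : forall x, expsum (N + N) d b x = 0).
  { apply (zero_count (N + N) d b s').
    - intros i Hi. apply Hs'; lia.
    - intros i Hi. rewrite Hdb. apply Hz'; lia. }
  assert (Hcl : forall beta, sumclass N c a beta - sumclass N c' a' beta = 0).
  { intro beta. rewrite <- (isolation _ _ _ Hzero beta). unfold sumclass.
    rewrite ssum_split.
    rewrite (ssum_ext N (fun j => if Req_EM_T (b j) beta then d j else 0)
                        (fun j => if Req_EM_T (a j) beta then c j else 0)).
    rewrite (ssum_ext N (fun j => if Req_EM_T (b (N + j)%nat) beta then d (N + j)%nat else 0)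
                        (fun j => -1 * (if Req_EM_T (a' j) beta then c' j else 0))).
    rewrite ssum_scal; ring.
    - intros j Hj. unfold d, b. destruct (Nat.ltb_spec (N + j) N); [lia|].
      replace (N + j - N)%nat with j by lia. destruct (Req_EM_T (a' j) beta); ring.
    - intros j Hj. unfold d, b. destruct (Nat.ltb_spec j N); [auto|lia]. }
  split.
  - intros n Hn. specialize (Hcl (a n)). rewrite sumclass_inj in Hcl by auto.
    destruct (classic (exists m, (m < N)%nat /\ a' m = a n)) as [[m [Hm Ham]]|Hno].
    + exists m. rewrite <- Ham, sumclass_inj in Hcl by auto. repeat split; auto; lra.
    + rewrite sumclass_none in Hcl. exfalso; apply (Hc_nz n Hn); lra.
      intros j Hj E. apply Hno; eauto.
  - intros m Hm. specialize (Hcl (a' m)). rewrite (sumclass_inj N c' a') in Hcl by auto.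
    destruct (classic (exists n, (n < N)%nat /\ a n = a' m)) as [[n [Hn Ham]]|Hno].
    + exists n. rewrite <- Ham, sumclass_inj in Hcl by auto. repeat split; auto; lra.
    + rewrite sumclass_none in Hcl. exfalso; apply (Hc'_nz m Hm); lra.
      intros j Hj E. apply Hno; eauto.
Qed.
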